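(* Let $i,j\in G$, let $\rho$ be a state on $L_2(G)$ with $\operatorname{Tr}K_{|\overline{b_i}\rangle\langle\overline{b_i}|}(\rho)>0$, and let $\gamma$ be a state on $L_2(G)$ such that $\operatorname{Tr}K_\gamma\big(U_jK_{|\overline{b_i}\rangle\langle\overline{b_i}|}(\rho)U_j^*\big)>0$. Then $\operatorname{Tr}_{1,2,3}(F_{i,j}\otimes I)(\rho\otimes\mathbf e(\gamma))(F_{i,j}\otimes I)>0$ and $$\Lambda_{i,j}(\rho\otimes\gamma)=\hat K_\gamma\circ K^j\circ\hat K_{|\overline{b_i}\rangle\langle\overline{b_i}|}(\rho),$$ where $K^j(\sigma)=U_j\sigma U_j^*$. Equivalently, $\Lambda_{i,j}(\rho\otimes\gamma)$ is the normalization to trace one of $K_\gamma(U_jB_i^*\rho B_iU_j^* )$.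
   Context: Fix an integer $n\ge 1$ and $G=\{1,\dots,n\}$. $L_2(G)$ is the space of functions $f:G\to\mathbb C$ with inner product $\langle f,g\rangle=\sum_{k\in G}\overline{f(k)}g(k)$; $L_2(G^2)$, $L_2(G^3)$ are the analogous spaces on $G^2,G^3$, identified with tensor products via $(f\otimes g)(k,l)=f(k)g(l)$; the three factors of $L_2(G^3)=\mathcal H_1\otimes\mathcal H_2\otimes\mathcal H_3$ are numbered 1,2,3. For a vector $f$, $|f\rangle\langle f|$ is the operator $\phi\mapsto\langle f,\phi\rangle f$. $I$ is the identity. A state is a positive operator of trace 1. For $k,l\in G$, $k\oplus l$ is the unique element of $G$ congruent to $k+l$ modulo $n$. $\mathcal O_g$ is the multiplication operator $(\mathcal O_gf)(k)=g(k)f(k)$. $J:L_2(G)\to L_2(G^2)$ is $(Jf)(k,l)=f(k)\delta_{k,l}$. $U_k$ is the unitary $(U_kf)(m)=f(k\oplus m)$. $(b_k)_{k\in G}$ is a fixed orthonormal basis of $L_2(G)$, $B_k=\mathcal O_{b_k}$, $\overline{b_i}$ the complex conjugate function. $\xi_{k,l}(m,r)=b_k(m)\delta_{m,r\oplus l}$ and $F_{i,j}=|\xi_{i,j}\rangle\langle\xi_{i,j}|$ (an operator on $\mathcal H_1\otimes\mathcal H_2$). For a state $\gamma$, $\mathbf e(\gamma):=J\gamma J^*$ (a state on $\mathcal H_2\otimes\mathcal H_3$). For states $\rho,\gamma$ with positive denominator, $$\Lambda_{i,j}(\rho\otimes\gamma):=\frac{\operatorname{Tr}_{1,2}(F_{i,j}\otimes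 I)(\rho\otimes\mathbf e(\gamma))(F_{i,j}\otimes I)}{\operatorname{Tr}_{1,2,3}(F_{i,j}\otimes I)(\rho\otimes\mathbf e(\gamma))(F_{i,j}\otimes I)},$$ with $\operatorname{Tr}_{1,2}$ the partial trace over $\mathcal H_1\otimes\mathcal H_2$ and $\operatorname{Tr}_{1,2,3}$ the full trace. For a positive operator $\tau=\sum_k\gamma_k|h_k\rangle\langle h_k|$ ($\gamma_k\ge0$, $(h_k)$ orthonormal basis), $K_\tau(\rho):=\sum_k\gamma_k\mathcal O_{h_k}\rho\mathcal O_{h_k}^*$ for positive operators $\rho$ (independent of the representation of $\tau$); for $\rho$ with $\operatorname{Tr}K_\tau(\rho)>0$, $\hat K_\tau(\rho):=K_\tau(\rho)/\operatorname{Tr}K_\tau(\rho)$. In particular $K_{|\overline{b_i}\rangle\langle\overline{b_i}|}(\rho)=B_i^*\rho B_i$. *)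

(* Defs.v *)
From HB Require Import structures.
From mathcomp Require Import all_boot all_order all_algebra.

Set Implicit Arguments.
Unset Strict Implicit.
Unset Printing Implicit Defensive.

Import Order.TTheory GRing.Theory Num.Theory.
Local Open Scope ring_scope.

(* Operators between finite-dimensional L_2 spaces L_2(Y) -> L_2(X) are
   represented by their kernels A : X -> Y -> C, acting by
   (A f)(x) = \sum_y A x y * f y. *)
Section Ops.
Variable C : numClosedFieldType.

Definition l2dot (X : finType) (f g : X -> C) : C := \sum_x (f x)^* * g x.
Definition opapp (X Y : finType) (A : X -> Y -> C) (f : Y -> C) : X -> C :=
  fun x => \sum_y A x y * f y.
Definition opcomp (X Y Z : finType) (A : X -> Y -> C) (B : Y -> Z -> C) : X -> Z -> C :=
  fun x z => \sum_y A x y * B y z.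
Definition opadj (X Y : finType) (A : X -> Y -> C) : Y -> X -> C :=
  fun y x => (A x y)^*.
Definition optr (X : finType) (A : X -> X -> C) : C := \sum_x A x x.
Definition idop (X : finType) : X -> X -> C := fun x y => (x == y)%:R.
Definition scaleop (X Y : finType) (a : C) (A : X -> Y -> C) : X -> Y -> C :=
  fun x y => a * A x y.
Definition pos_op (X : finType) (A : X -> X -> C) : Prop :=
  forall f : X -> C, 0 <= l2dot f (opapp A f).
Definition is_state (X : finType) (A : X -> X -> C) : Prop :=
  pos_op A /\ optr A = 1.
Definition ketbra (X : finType) (f : X -> C) : X -> X -> C :=
  fun x y => f x * (f y)^*.
Definition mulop (X : finType) (g : X -> C) : X -> X -> C :=
  fun x y => if x == y then g x else 0.
Definition optensor (X Y : finType) (A : X -> X -> C) (B : Y -> Y -> C)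
  : X * Y -> X * Y -> C := fun p q => A p.1 q.1 * B p.2 q.2.
Definition normalize_tr (X : finType) (A : X -> X -> C) : X -> X -> C :=
  scaleop (optr A)^-1 A.
Definition ortho_basis (X I : finType) (h : I -> X -> C) : Prop :=
  forall k l, l2dot (h k) (h l) = (k == l)%:R.
End Ops.

(* The set G = {1,...,n} is represented by 'I_n, the ordinal k : 'I_n standing
   for the element k+1 of G. *)
Section G.
Variable C : numClosedFieldType.
Variable n : nat.

Lemma ord_pos (k : 'I_n) : (0 < n)%N.
Proof. exact: leq_ltn_trans (leq0n k) (ltn_ord k). Qed.

(* k (+) l : the element of G congruent to k+l mod n.  In 0-based codes:
   code(k (+) l) = ((code k + 1) + (code l + 1) - 1) mod n. *)
Definition oplus (k l : 'I_n) : 'I_n :=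
  Ordinal (ltn_pmod (k + l + 1) (ord_pos k)).

Definition Jop : 'I_n * 'I_n -> 'I_n -> C :=
  fun p m => ((p.1 == p.2) && (p.1 == m))%:R.

Definition Ush (k : 'I_n) : 'I_n -> 'I_n -> C :=
  fun m m' => (m' == oplus k m)%:R.

Definition xi (b : 'I_n -> 'I_n -> C) (k l : 'I_n) : 'I_n * 'I_n -> C :=
  fun p => b k p.1 * (p.1 == oplus p.2 l)%:R.

Definition Fop (b : 'I_n -> 'I_n -> C) (i j : 'I_n) := ketbra (xi b i j).

Definition estate (gamma : 'I_n -> 'I_n -> C) : 'I_n * 'I_n -> 'I_n * 'I_n -> C :=
  opcomp (opcomp Jop gamma) (opadj Jop).

(* L_2(G^3) = H_1 (x) H_2 (x) H_3, indexed by ((k1,k2),k3).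
   rho (x) sigma with rho on H_1 and sigma on H_2 (x) H_3. *)
Definition tensor1_23 (rho : 'I_n -> 'I_n -> C)
  (sigma : 'I_n * 'I_n -> 'I_n * 'I_n -> C)
  : ('I_n * 'I_n) * 'I_n -> ('I_n * 'I_n) * 'I_n -> C :=
  fun x y => rho x.1.1 y.1.1 * sigma (x.1.2, x.2) (y.1.2, y.2).

Definition ptr12 (M : ('I_n * 'I_n) * 'I_n -> ('I_n * 'I_n) * 'I_n -> C)
  : 'I_n -> 'I_n -> C :=
  fun x y => \sum_a \sum_b M ((a, b), x) ((a, b), y).

Definition LambdaNum (b : 'I_n -> 'I_n -> C) (i j : 'I_n)
  (rho gamma : 'I_n -> 'I_n -> C) :=
  let FI := optensor (Fop b i j) (@idop C _) in
  opcomp (opcomp FI (tensor1_23 rho (estate gamma))) FI.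

Definition Lambda (b : 'I_n -> 'I_n -> C) (i j : 'I_n)
  (rho gamma : 'I_n -> 'I_n -> C) : 'I_n -> 'I_n -> C :=
  scaleop (optr (LambdaNum b i j rho gamma))^-1
          (ptr12 (LambdaNum b i j rho gamma)).

(* K_tau(rho) = \sum_k c_k O_{h_k} rho O_{h_k}^*, computed from a
   representation tau = \sum_k c_k |h_k><h_k| *)
Definition Kdec (c : 'I_n -> C) (h : 'I_n -> 'I_n -> C)
  (rho : 'I_n -> 'I_n -> C) : 'I_n -> 'I_n -> C :=
  fun x y => \sum_k c k * opcomp (opcomp (mulop (h k)) rho) (opadj (mulop (h k))) x y.

Definition is_decomp (tau : 'I_n -> 'I_n -> C) (c : 'I_n -> C)
  (h : 'I_n -> 'I_n -> C) : Prop :=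
  [/\ forall k, 0 <= c k, ortho_basis h &
      tau = fun x y => \sum_k c k * ketbra (h k) x y].

Definition Kshift (j : 'I_n) (sigma : 'I_n -> 'I_n -> C) : 'I_n -> 'I_n -> C :=
  opcomp (opcomp (Ush j) sigma) (opadj (Ush j)).

(* K_{|conj b_i><conj b_i|}(rho) = B_i^* rho B_i *)
Definition Kbbar (b : 'I_n -> 'I_n -> C) (i : 'I_n) (rho : 'I_n -> 'I_n -> C)
  : 'I_n -> 'I_n -> C :=
  opcomp (opcomp (opadj (mulop (b i))) rho) (mulop (b i)).
End G.

(* Main.v *)
Require Import Defs.
From HB Require Import structures.
From mathcomp Require Import all_boot all_order all_algebra ring.
From Stdlib Require Import FunctionalExtensionality.
Import Order.TTheory GRing.Theory Num.Theory.
Local Open Scope ring_scope.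

Set Implicit Arguments.
Section H.
Variable C : numClosedFieldType.

Lemma sum_one {X : finType} (a : X) (F : X -> C) :
  (forall x, x != a -> F x = 0) -> \sum_x F x = F a.
Proof.
move=> H; rewrite (bigD1 a) //= big1 ?addr0 // => x; exact: H.
Qed.

Lemma sumP {X Y : finType} (F : X * Y -> C) :
  \sum_p F p = \sum_x \sum_y F (x, y).
Proof. by rewrite pair_bigA; apply: eq_bigr => -[]. Qed.

Variable n : nat.
Ltac kill hz := let h := fresh in have h := hz; rewrite eq_sym in h;
  rewrite ?(negbTE hz) ?(negbTE h) /= ?(andbF, andFb, mulr0n, conjC0, mulr0, mul0r, add0r, addr0) //.

Lemma oplusC (k l : 'I_n) : oplus k l = oplus l k.
Proof. by apply: val_inj => /=; rewrite (addnC k). Qed.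

Lemma oplus_inj (j : 'I_n) : injective (fun k => oplus k j).
Proof.
move=> k l /(congr1 val) /= /eqP.
rewrite -!addnA !(addnC _ (j + 1)%N) eqn_modDl !modn_small //.
by move/eqP/val_inj.
Qed.

Lemma estateE (gamma : 'I_n -> 'I_n -> C) p1 p2 q1 q2 :
  estate gamma (p1, p2) (q1, q2) = (p1 == p2)%:R * (q1 == q2)%:R * gamma p1 q1.
Proof.
rewrite /estate /opcomp /opadj /Jop /=.
rewrite (sum_one q1) => [|z hz]; last first.
  by kill hz; rewrite andbF conjC0 mulr0.
rewrite (sum_one p1) => [|y hy]; last by kill hy; rewrite andbF mul0r.
rewrite !eqxx !andbT conjC_nat.
by rewrite mulrAC.
Qed.



Lemma KbbarE (b : 'I_n -> 'I_n -> C) i rho x y :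
  Kbbar b i rho x y = (b i x)^* * rho x y * b i y.
Proof.
rewrite /Kbbar /opcomp /opadj /mulop.
rewrite (sum_one y) => [|z hz]; last by kill hz.
rewrite (sum_one x) => [|z hz]; last by kill hz.
by rewrite !eqxx.
Qed.

Lemma KshiftE j (s : 'I_n -> 'I_n -> C) x y :
  Kshift j s x y = s (oplus j x) (oplus j y).
Proof.
rewrite /Kshift /opcomp /opadj /Ush.
rewrite (sum_one (oplus j y)) => [|z hz]; last by kill hz.
rewrite (sum_one (oplus j x)) => [|z hz]; last by kill hz.
by rewrite !eqxx conjC_nat /= !mulr1n mulr1 mul1r.
Qed.

Lemma LNE (b : 'I_n -> 'I_n -> C) i j rho gamma P Q :
  LambdaNum b i j rho gamma P Q = xi b i j P.1 * (xi b i j Q.1)^* *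
    (gamma P.2 Q.2 * Kshift j (Kbbar b i rho) P.2 Q.2).
Proof.
case: P => P x; case: Q => Q y.
rewrite /LambdaNum /opcomp /optensor /Fop /ketbra /idop /tensor1_23 /=.
rewrite sumP.
under eq_bigr => S1 _.
  rewrite (sum_one y) => [|z hz]; last by kill hz.
  rewrite sumP.
  under eq_bigr => R1 _.
    rewrite (sum_one x) => [|z hz]; last by kill hz.
    over.
  over.
rewrite /= !eqxx /= !mulr1n.
under eq_bigr do rewrite big_distrl.
rewrite sumP.
apply: eq_trans (_ : _ = \sum_a' \sum_a (xi b i j P * (xi b i j (a, x))^* *
   (rho a a' * gamma x y)) * (xi b i j (a', y) * (xi b i j Q)^*)) _.
  apply: eq_bigr => a' _.
  rewrite (sum_one y) => [|z hz]; last first.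
    by rewrite big1 // => R1 _; case: R1 => r1 r2; rewrite estateE; kill hz.
  rewrite sumP; apply: eq_bigr => a _.
  rewrite (sum_one x) => [|z hz]; last by rewrite estateE; kill hz.
  rewrite estateE !eqxx /= !mulr1n; ring.
rewrite KshiftE KbbarE (oplusC j x) (oplusC j y).
rewrite (sum_one (oplus y j)) => [|z hz]; last first.
  by rewrite big1 // => a _; rewrite /xi /=; kill hz.
rewrite (sum_one (oplus x j)) => [|z hz]; last by rewrite /xi /=; kill hz.
rewrite /xi /= !eqxx /= !mulr1n !mulr1; ring.
Qed.

Lemma KdecE (gamma : 'I_n -> 'I_n -> C) c h tau x y :
  is_decomp gamma c h -> Kdec c h tau x y = gamma x y * tau x y.
Proof.
case=> _ _ ->; rewrite /Kdec big_distrl /=; apply: eq_bigr => k _.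
rewrite /opcomp /opadj /mulop /ketbra.
rewrite (sum_one y) => [|z hz]; last by kill hz.
rewrite (sum_one x) => [|z hz]; last by kill hz.
rewrite !eqxx; ring.
Qed.

Lemma nxi (b : 'I_n -> 'I_n -> C) i j : ortho_basis b ->
  \sum_p xi b i j p * (xi b i j p)^* = 1.
Proof.
move=> hb; rewrite sumP exchange_big /=.
under eq_bigr => b' _.
  rewrite (sum_one (oplus b' j)) => [|z hz]; last by rewrite /xi /=; kill hz.
  over.
apply: eq_trans (_ : _ = \sum_b' (fun a => (b i a)^* * b i a) (oplus b' j)) _.
  by apply: eq_bigr => b' _; rewrite /xi /= eqxx /= mulr1n mulr1 mulrC.
rewrite -(reindex_inj (oplus_inj (j:=j)) (P:=xpredT) (F:=fun a => (b i a)^* * b i a)) /=.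
by have := hb i i; rewrite /l2dot eqxx.
Qed.
End H.

Theorem proposition3 (C : numClosedFieldType) (n : nat) (hn : (0 < n)%N)
  (b : 'I_n -> 'I_n -> C) (hb : ortho_basis b)
  (i j : 'I_n) (rho gamma : 'I_n -> 'I_n -> C)
  (c : 'I_n -> C) (h : 'I_n -> 'I_n -> C) :
  is_state rho ->
  0 < optr (Kbbar b i rho) ->
  is_state gamma ->
  is_decomp gamma c h ->
  0 < optr (Kdec c h (Kshift j (Kbbar b i rho))) ->
  0 < optr (LambdaNum b i j rho gamma) /\
  Lambda b i j rho gamma =
    normalize_tr (Kdec c h (Kshift j (normalize_tr (Kbbar b i rho)))).
Proof.
move=> _ hs _ hd hN.
set sg := Kbbar b i rho in hs hN *.
set N := Kdec c h (Kshift j sg) in hN *.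
have NE x y : N x y = gamma x y * Kshift j sg x y by rewrite /N (@KdecE C n gamma c h _ x y hd).
have LE P Q : LambdaNum b i j rho gamma P Q = xi b i j P.1 * (xi b i j Q.1)^* * N P.2 Q.2.
  by rewrite LNE NE.
have trE : optr (LambdaNum b i j rho gamma) = optr N.
  rewrite /optr sumP.
  under eq_bigr => p _ do under eq_bigr => x _ do rewrite LE /=.
  under eq_bigr => p _ do rewrite -big_distrr /=.
  by rewrite -big_distrl /= nxi // mul1r.
have ptrE : ptr12 (LambdaNum b i j rho gamma) = N.
  apply: functional_extensionality => x; apply: functional_extensionality => y.
  rewrite /ptr12.
  under eq_bigr => a _ do under eq_bigr => b' _ do rewrite LE /=.
  by rewrite -(@sumP C _ _ (fun p => xi b i j p * (xi b i j p)^* * N x y)) -big_distrl /= nxi // mul1r.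
split; first by rewrite trE.
rewrite /Lambda trE ptrE.
have RE : Kdec c h (Kshift j (normalize_tr sg)) = scaleop (optr sg)^-1 N.
  apply: functional_extensionality => x; apply: functional_extensionality => y.
  rewrite (@KdecE C n gamma c h _ x y hd) /scaleop NE !KshiftE /normalize_tr /scaleop; ring.
rewrite RE /normalize_tr.
apply: functional_extensionality => x; apply: functional_extensionality => y.
have hs0 : optr sg != 0 by rewrite gt_eqF.
have hN0 : optr N != 0 by rewrite gt_eqF.
rewrite /scaleop /optr.
rewrite -big_distrr /= -/(optr N).
field.
by rewrite hs0 hN0.
Qed.
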